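(* Let $k$ be a field and let $A$ be a graded Artinian $k$-algebra with a strong Lefschetz element $\ell\in A_1$. Then for every integer $j>0$, the algebra $A/[0:(\ell^j)]$ has the strong Lefschetz property, with (the image of) $\ell$ as a strong Lefschetz element.
   Context: A graded Artinian $k$-algebra $A$ has the strong Lefschetz property (SLP) if there exists $\ell\in A_1$ such that for all integers $i$ and $j\ge 0$ the multiplication map $\cdot\ell^j\colon A_i\to A_{i+j}$ has maximal rank (is injective or surjective); such $\ell$ is called a strong Lefschetz element. Here $0:(\ell^j)=\{a\in A\mid a\ell^j=0\}$. *)

(* Defs.v *)
From HB Require Import structures.
From mathcomp Require Import all_boot all_order all_algebra all_field.
Set Implicit Arguments. Unset Strict Implicit. Unset Printing Implicit Defensive.
Import GRing.Theory.
Local Open Scope ring_scope.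
Local Open Scope vspace_scope.

Definition is_grading (K : fieldType) (A : falgType K) (G : nat -> {vspace A}) : Prop :=
  (exists N : nat,
      (forall i, (N <= i)%N -> G i = 0%VS) /\
      (\sum_(i < N) G i)%VS = fullv /\
      directv (\sum_(i < N) G i)%VS) /\
  (forall i j : nat, (G i * G j <= G (i + j)%N)%VS).

(* Graded Artinian K-algebra: commutative, finite-dimensional over K (built into
   falgType), graded, with A_0 = K (the line spanned by 1). *)
Definition graded_artinian (K : fieldType) (A : falgType K) (G : nat -> {vspace A}) : Prop :=
  (forall x y : A, (x * y)%R = (y * x)%R) /\ is_grading G /\ G 0%N = 1%VS.

Definition max_rank_mul (K : fieldType) (A : falgType K) (G : nat -> {vspace A})
  (l : A) (i j : nat) : Prop :=
  (lker (amull (l ^+ j)%R) :&: G i = 0)%VS \/ (amull (l ^+ j)%R @: G i = G (i + j)%N)%VS.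

Definition strong_lefschetz_element (K : fieldType) (A : falgType K)
  (G : nat -> {vspace A}) (l : A) : Prop :=
  l \in G 1%N /\ forall i j : nat, max_rank_mul G l i j.

Definition in_colon0 (K : fieldType) (A : falgType K) (l : A) (j : nat) (a : A) : bool :=
  ((a * l ^+ j)%R == 0)%R.

(* Main.v *)
Require Import Defs.
From HB Require Import structures.
From mathcomp Require Import all_boot all_order all_algebra all_field.
Local Open Scope ring_scope.
Local Open Scope vspace_scope.
Import GRing.Theory.

Lemma powG (K : fieldType) (A : falgType K) (G : nat -> {vspace A}) (l : A)
  (hA : graded_artinian G) (hl1 : l \in G 1%N) m : (l ^+ m)%R \in G m.
Proof.
case: hA => _ [[_ hg] h0].
elim: m => [|m IH]; first by rewrite expr0 h0; apply: memv_line.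
rewrite exprS; apply: (subvP (hg 1%N m)); exact: memv_mul.
Qed.

Theorem mainTheorem4 (K : fieldType) (A : falgType K) (G : nat -> {vspace A}) (l : A)
  (hA : graded_artinian G) (hl : strong_lefschetz_element G l)
  (j : nat) (hj : (0 < j)%N)
  (B : falgType K) (pi : 'AHom(A, B))
  (hsurj : limg pi = fullv)
  (hker : forall a : A, (pi a == 0%R) = in_colon0 l j a) :
  strong_lefschetz_element (fun i => pi @: G i) (pi l).
Proof.
case: hl => hl1 hmr.
have hcomm := hA.1.
have hg := hA.2.1.2.
split; first exact: memv_img.
move=> i m.
have e : forall a, (l ^+ (j + m) * a = l ^+ m * a * l ^+ j)%R.
  by move=> a; rewrite -mulrA [(a * _)%R]hcomm mulrA -exprD addnC.
 rewrite /max_rank_mul.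
case: (hmr i (j + m)%N) => [hinj | hsur].
- left; apply/eqP; rewrite -subv0; apply/subvP => b.
  rewrite memv_cap memv_ker memv0 => /andP [hb hb2].
  case/memv_imgP: hb2 hb => a ha -> hb.
  move: hb; rewrite lfunE /= -rmorphXn -rmorphM hker /in_colon0 => /eqP h.
  have : a \in (lker (amull (l ^+ (j + m))%R) :&: G i)%VS.
    rewrite memv_cap ha andbT memv_ker lfunE /= (e a) h //.
  by rewrite hinj memv0 => /eqP ->; rewrite linear0.
- right; apply/eqP; rewrite eqEsubv; apply/andP; split.
  + apply/subvP => _ /memv_imgP [b /memv_imgP [a ha ->] ->].
    rewrite lfunE /= -rmorphXn -rmorphM; apply: memv_img.
    rewrite addnC; apply: (subvP (hg m i)); apply: memv_mul => //.
    exact: powG.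
  + apply/subvP => _ /memv_imgP [c hc ->].
    have : (c * l ^+ j)%R \in G (i + (j + m))%N.
      rewrite addnA (addnC i j) -addnA addnC.
      by apply: (subvP (hg (i + m)%N j)); apply: memv_mul => //; exact: powG.
    rewrite -hsur => /memv_imgP [a ha]; rewrite lfunE /= => hca.
    apply/memv_imgP; exists (pi a); first exact: memv_img.
    rewrite lfunE /= -rmorphXn -rmorphM; apply/eqP; rewrite -subr_eq0 -raddfB hker.
    by rewrite /in_colon0 mulrBl hca (e a) subrr.
Qed.
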